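(* Let $H$ be a complex Hilbert space with $\dim H=2$, let $u\in H$ be a unit vector and $P=|u\rangle\langle u|$ the corresponding rank-one orthogonal projection, and let $R\in B(H)_+$. Define $R_0:=R$ and $R_{n+1}:=R_n^{1/2}(I-P)R_n^{1/2}$ for $n\ge0$. Then $R_n$ converges in norm to $$R_\infty=\begin{cases}0, & \text{if } PR\neq RP,\\ R^{1/2}(I-P)R^{1/2}=(I-P)R(I-P), & \text{if } PR=RP.\end{cases}$$
   Context: For vectors $x,y$, $|x\rangle\langle y|$ denotes the operator $z\mapsto\langle y,z\rangle x$. $B(H)_+$ denotes the positive bounded operators on $H$, and $R^{1/2}$ is the positive square root. *)

(* Defs.v *)
From HB Require Import structures.
From mathcomp Require Import all_boot all_order all_algebra.
From mathcomp Require Import reals.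
From mathcomp Require Import complex.
From Stdlib Require Import ClassicalEpsilon.
Set Implicit Arguments. Unset Strict Implicit. Unset Printing Implicit Defensive.
Import Order.TTheory GRing.Theory Num.Theory.
Local Open Scope ring_scope.

Section Defs.
Variable R : realType.
Local Notation C := R[i].

Definition adjm (m n : nat) (A : 'M[C]_(m, n)) : 'M[C]_(n, m) :=
  (map_mx Num.conj A)^T.

(* inner product <y,z> = y^* z (antilinear in the first slot) *)
Definition inner (y z : 'cV[C]_2) : C := (adjm y *m z) 0 0.

Definition vnorm2 (x : 'cV[C]_2) : C := inner x x.

Definition psd (A : 'M[C]_2) : Prop := forall x : 'cV[C]_2, 0 <= inner x (A *m x).

Definition psqrt (A : 'M[C]_2) : 'M[C]_2 :=
  epsilon (inhabits 0) (fun S => psd S /\ S *m S = A).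

(* rank-one operator |x><y| : z |-> <y,z> x *)
Definition ketbra (x y : 'cV[C]_2) : 'M[C]_2 := x *m adjm y.

Definition Rseq (P A : 'M[C]_2) (n : nat) : 'M[C]_2 :=
  iter n (fun S => psqrt S *m (1 - P) *m psqrt S) A.

(* norm convergence: for every eps > 0, eventually ||A_n - L|| <= eps, where
   ||B|| <= eps  iff  ||B x|| <= eps ||x|| for all x (squared form) *)
Definition norm_cvg (A : nat -> 'M[C]_2) (L : 'M[C]_2) : Prop :=
  forall eps : C, 0 < eps -> exists N : nat, forall n : nat, (N <= n)%N ->
    forall x : 'cV[C]_2, vnorm2 ((A n - L) *m x) <= eps ^+ 2 * vnorm2 x.

End Defs.

(* Main.v *)
Require Import Defs.
From HB Require Import structures.
From mathcomp Require Import all_boot all_order all_algebra.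
From mathcomp Require Import reals complex ring lra.
From Stdlib Require Import ClassicalEpsilon.
Set Implicit Arguments. Unset Strict Implicit. Unset Printing Implicit Defensive.
Import Order.TTheory GRing.Theory Num.Theory.
Local Open Scope ring_scope.

Section Geo.
Variable R : realType.

Lemma bern (h : R) m : 0 <= h -> 1 + m%:R * h <= (1 + h) ^+ m.
Proof.
move=> h0; elim: m => [|m IH]; first by rewrite mul0r addr0 expr0.
rewrite exprS -addn1 natrD.
have hp : 0 <= m%:R * h by rewrite mulr_ge0.
have h1 : (1 + m%:R * h) * (1 + h) <= (1 + h) * (1 + h) ^+ m.
  by rewrite mulrC ler_wpM2l // addr_ge0.
apply: le_trans h1; nra.
Qed.

Lemma geo_small_R (r d : R) : 0 <= r -> r < 1 -> 0 < d ->
  exists N, forall m, (N <= m)%N -> r ^+ m <= d.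
Proof.
move=> r0 r1 d0.
have [->|rn0] := eqVneq r 0.
  by exists 1%N => m hm; rewrite expr0n -(prednK hm) /= ltW.
have rp : 0 < r by rewrite lt_def rn0 r0.
set h := r^-1 - 1.
have hp : 0 < h by rewrite /h subr_gt0 invf_gt1.
have rh : r * (1 + h) = 1 by rewrite /h addrC subrK mulfV.
have dh : 0 < d * h by rewrite mulr_gt0.
have dhi : 0 < (d * h)^-1 by rewrite invr_gt0.
have hb := archi_boundP (ltW dhi). 
set N := Num.Def.archi_bound _ in hb.
exists N => m hm.
have hmN : (d * h)^-1 <= m%:R.
  by apply: le_trans (ltW hb) _; rewrite ler_nat.
have h1 : 1 <= m%:R * (d * h).
  by rewrite -ler_pdivrMr // div1r.
have h2 : 1 <= d * (1 + h) ^+ m.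
  apply: le_trans h1 _.
  have := bern m (ltW hp).
  have : 0 <= m%:R by [].
  nra.
have -> : r ^+ m = r ^+ m * 1 by rewrite mulr1.
apply: le_trans (_ : r ^+ m * (d * (1 + h) ^+ m) <= d).
  by rewrite ler_wpM2l // exprn_ge0.
by rewrite mulrCA -exprMn rh expr1n mulr1.
Qed.

Lemma geo_small (c dl : R[i]) : 0 <= c -> c < 1 -> 0 < dl ->
  exists N, forall m, (N <= m)%N -> c ^+ m <= dl.
Proof.
move=> c0 c1 d0.
have ec : (real_complex R (@complex.Re R c)) = c := RRe_real (ger0_real c0).
have ed : (real_complex R (@complex.Re R dl)) = dl := RRe_real (ger0_real (ltW d0)).
have r0 : 0 <= (@complex.Re R c) by rewrite -ler0c ec.
have r1 : (@complex.Re R c) < 1 by rewrite -ltcR ec.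
have dp : 0 < @complex.Re R dl by rewrite -ltcR ed.
have [N hN] := geo_small_R r0 r1 dp.
exists N => m hm; rewrite -ec -ed -rmorphXn lecR; exact: hN.
Qed.
End Geo.

Section Work.
Variable R : realType.
Local Notation C := R[i].
Implicit Types (x y z w : 'cV[C]_2) (S A M : 'M[C]_2).

Lemma sum2 (F : 'I_2 -> C) : \sum_(i < 2) F i = F 0 + F 1.
Proof. rewrite big_ord_recl big_ord1; congr (_ + F _); exact: val_inj. Qed.

Lemma ord2_cases (i : 'I_2) : i = 0 \/ i = 1.
Proof. case: i => [[|[|//]]] Hi; [left|right]; exact: val_inj. Qed.

Lemma ord1_0 (i : 'I_1) : i = 0.
Proof. case: i => [[|//]] Hi; exact: val_inj. Qed.

Lemma adjmK m n (B : 'M[C]_(m, n)) : adjm (adjm B) = B.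
Proof. by apply/matrixP => i j; rewrite !mxE conjCK. Qed.

Lemma adjmM m n p (B : 'M[C]_(m, n)) (D : 'M[C]_(n, p)) :
  adjm (B *m D) = adjm D *m adjm B.
Proof. by rewrite /adjm map_mxM trmx_mul. Qed.

Lemma adjmD m n (B D : 'M[C]_(m, n)) : adjm (B + D) = adjm B + adjm D.
Proof. by apply/matrixP => i j; rewrite !mxE rmorphD. Qed.

Lemma adjmN m n (B : 'M[C]_(m, n)) : adjm (- B) = - adjm B.
Proof. by apply/matrixP => i j; rewrite !mxE rmorphN. Qed.

Lemma adjmB m n (B D : 'M[C]_(m, n)) : adjm (B - D) = adjm B - adjm D.
Proof. by rewrite adjmD adjmN. Qed.

Lemma adjmZ m n a (B : 'M[C]_(m, n)) : adjm (a *: B) = a^* *: adjm B.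
Proof. by apply/matrixP => i j; rewrite !mxE rmorphM. Qed.

Lemma inner_sum y z : inner y z = \sum_(i < 2) (y i 0)^* * z i 0.
Proof. by rewrite /inner /adjm !mxE; apply: eq_bigr => i _; rewrite !mxE. Qed.

Lemma inner_adj y M z : inner y (M *m z) = inner (adjm M *m y) z.
Proof. by rewrite /inner adjmM adjmK mulmxA. Qed.

Lemma innerDl y1 y2 z : inner (y1 + y2) z = inner y1 z + inner y2 z.
Proof. by rewrite /inner adjmD mulmxDl mxE. Qed.

Lemma innerDr y z1 z2 : inner y (z1 + z2) = inner y z1 + inner y z2.
Proof. by rewrite /inner mulmxDr mxE. Qed.

Lemma innerBl y1 y2 z : inner (y1 - y2) z = inner y1 z - inner y2 z.
Proof. by rewrite /inner adjmB mulmxBl [X in X = _]mxE [X in _ + X = _]mxE. Qed.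

Lemma innerBr y z1 z2 : inner y (z1 - z2) = inner y z1 - inner y z2.
Proof. by rewrite /inner mulmxBr [X in X = _]mxE [X in _ + X = _]mxE. Qed.

Lemma innerZl a y z : inner (a *: y) z = a^* * inner y z.
Proof. by rewrite /inner adjmZ -scalemxAl mxE. Qed.

Lemma innerZr a y z : inner y (a *: z) = a * inner y z.
Proof. by rewrite /inner -scalemxAr mxE. Qed.

Lemma inner0l z : inner 0 z = 0.
Proof. by rewrite inner_sum big1 // => i _; rewrite mxE rmorph0 mul0r. Qed.

Lemma innerC y z : (inner y z)^* = inner z y.
Proof.
rewrite !inner_sum rmorph_sum; apply: eq_bigr => i _.
by rewrite rmorphM /= conjCK mulrC.
Qed.

Lemma inner_ge0 x : 0 <= inner x x.
Proof.
rewrite inner_sum; apply: sumr_ge0 => i _; rewrite mulrC; exact: mul_conjC_ge0.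
Qed.

Lemma inner_eq0 x : inner x x = 0 -> x = 0.
Proof.
rewrite inner_sum => H; apply/matrixP => i j; rewrite (ord1_0 j) mxE.
have Hge : forall k : 'I_2, true -> 0 <= (x k 0)^* * x k 0.
  by move=> k _; rewrite mulrC; exact: mul_conjC_ge0.
have := @psumr_eq0P _ _ _ _ Hge H i isT.
by rewrite mulrC => /eqP; rewrite mul_conjC_eq0 => /eqP.
Qed.

Lemma vnorm2E x : vnorm2 x = inner x x. Proof. by []. Qed.

Lemma rank1_mul x z : x *m adjm x *m z = inner x z *: x.
Proof. by rewrite -mulmxA [adjm x *m z]mx11_scalar mul_mx_scalar. Qed.

Lemma col_eq m (B D : 'M[C]_(2, m)) : (forall j, col j B = col j D) -> B = D.
Proof.
move=> H; apply/matrixP => i j; have := congr1 (fun N : 'cV[C]_2 => N i 0) (H j).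
by rewrite !mxE.
Qed.

Lemma col_mulmx m (B : 'M[C]_2) (D : 'M[C]_(2, m)) j : col j (B *m D) = B *m col j D.
Proof. by rewrite !colE mulmxA. Qed.


Lemma ii : 'i * 'i = -1 :> C.
Proof. by rewrite -expr2 sqrCi. Qed.

Lemma psd_herm S : psd S -> adjm S = S.
Proof.
move=> hS.
have hr : forall x, (inner x (S *m x))^* = inner x (S *m x).
  by move=> x; exact: geC0_conj (hS x).
have key : forall y z, inner y (S *m z) = (inner z (S *m y))^*.
  move=> y z.
  set a := inner y (S *m z). set b := inner z (S *m y).
  set gy := inner y (S *m y). set gz := inner z (S *m z).
  have F1 : inner (y+z) (S *m (y+z)) = gy + a + b + gz.
    by rewrite mulmxDr !innerDl !innerDr /a /b /gy /gz; ring.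
  have F2 : inner (y + 'i *: z) (S *m (y + 'i *: z)) = gy + 'i * a - 'i * b + gz.
    rewrite mulmxDr -scalemxAr !innerDl !innerDr !innerZl !innerZr conjCi.
    rewrite -/a -/b -/gy -/gz mulrA !mulNr ii; ring.
  have E1 := hr (y+z); have E2 := hr (y + 'i *: z).
  rewrite F1 in E1; rewrite F2 in E2.
  rewrite !rmorphD /= hr hr in E1.
  rewrite !rmorphD !rmorphN !rmorphM /= hr hr conjCi in E2.
  rewrite -/gy -/gz in E1 E2.
  have H : ('i *+ 2) * (a - b^*) = 'i * ((gy + a + b + gz) - (gy + a^* + b^* + gz))
     + ((gy + 'i*a - 'i*b + gz) - (gy + - 'i * a^* - - 'i * b^* + gz)) by ring.
  rewrite -E1 -E2 !subrr mulr0 add0r in H.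
  move/eqP: H; rewrite mulf_eq0 mulrn_eq0 /= (negbTE (neq0Ci _)) /= subr_eq0.
  by move/eqP.
apply: col_eq => j; rewrite !colE; apply/eqP; rewrite -subr_eq0 -mulmxBl; apply/eqP.
set e := delta_mx j 0; set w := (adjm S - S) *m e; apply: inner_eq0.
rewrite {2}/w mulmxBl innerBr inner_adj adjmK -innerC (key e w) conjCK.
by rewrite subrr.
Qed.

Lemma inner0r y : inner y 0 = 0.
Proof. by rewrite /inner mulmx0 mxE. Qed.

Lemma herm_sq0 S y : adjm S = S -> S *m (S *m y) = 0 -> S *m y = 0.
Proof. by move=> hS H; apply: inner_eq0; rewrite inner_adj hS H inner0l. Qed.

Lemma herm_sq0_mx S M : adjm S = S -> S *m S *m M = 0 -> S *m M = 0.
Proof.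
move=> hS H; apply: col_eq => j; rewrite col_mulmx [col j 0]colE mul0mx.
apply: herm_sq0 => //; by rewrite -!col_mulmx mulmxA H colE mul0mx.
Qed.

Lemma psd_eig S y a : psd S -> 0 <= a -> S *m (S *m y) = a *: y ->
  S *m y = sqrtC a *: y.
Proof.
move=> hS ha H; have hH := psd_herm hS.
have [a0|a0] := eqVneq a 0.
  rewrite a0 sqrtC0 scale0r; apply: herm_sq0 => //; by rewrite H a0 scale0r.
set s := sqrtC a; have s_gt0 : 0 < s by rewrite sqrtC_gt0 lt_def a0 ha.
set w := S *m y - s *: y.
have Hw : S *m w + s *: w = 0.
  rewrite /w mulmxBr -scalemxAr H scalerBr scalerA -expr2 /s sqrtCK.
  by rewrite addrA subrK subrr.
have : inner w (S *m w) + s * inner w w = 0.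
  by rewrite -innerZr -innerDr Hw inner0r.
move/eqP; rewrite paddr_eq0 ?(hS w) ?mulr_ge0 ?inner_ge0 ?ltW // => /andP[_].
rewrite mulf_eq0 (gt_eqF s_gt0) /= => /eqP /inner_eq0 /eqP.
by rewrite subr_eq0 => /eqP.
Qed.

Lemma quad2 A x : inner x (A *m x) =
  (x 0 0)^* * (A 0 0 * x 0 0 + A 0 1 * x 1 0) + (x 1 0)^* * (A 1 0 * x 0 0 + A 1 1 * x 1 0).
Proof. by rewrite inner_sum sum2 !mxE !sum2. Qed.

Definition mkv (p q : C) : 'cV[C]_2 := \col_i (if i == 0 then p else q).
Lemma mkv0 p q : mkv p q 0 0 = p. Proof. by rewrite mxE. Qed.
Lemma mkv1 p q : mkv p q 1 0 = q. Proof. by rewrite mxE. Qed.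

Lemma subeq (x y z w : C) : x - y = z - w -> z = w -> x = y.
Proof. by move=> H e; apply/eqP; rewrite -subr_eq0 H e subrr. Qed.

Lemma sq_aux (r tau e p q u w : C) : r * r = tau -> r != 0 -> p * q + u * w = tau * e ->
  r^-1 * p * (r^-1 * q) + r^-1 * u * (r^-1 * w) = e.
Proof.
move=> hr r0 H.
have -> : r^-1 * p * (r^-1 * q) + r^-1 * u * (r^-1 * w) = (r*r)^-1 * (p*q + u*w).
  by rewrite invfM; ring.
by rewrite hr H mulKf // -hr mulf_neq0.
Qed.

Lemma psqrt_exists A : psd A -> exists S, psd S /\ S *m S = A.
Proof.
move=> hA; have hH := psd_herm hA.
have hc : A 1 0 = (A 0 1)^*.
  by have := congr1 (fun N : 'M[C]_2 => N 1 0) hH; rewrite !mxE => <-.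
have ha : 0 <= A 0 0.
  have := hA (mkv 1 0); rewrite quad2 mkv0 mkv1 rmorph0 rmorph1.
  by rewrite !(mul0r, mulr0, mul1r, mulr1, addr0, add0r).
have hd : 0 <= A 1 1.
  have := hA (mkv 0 1); rewrite quad2 mkv0 mkv1 rmorph0 rmorph1.
  by rewrite !(mul0r, mulr0, mul1r, mulr1, addr0, add0r).
set a := A 0 0 in ha *; set b := A 0 1 in hc *; set c := A 1 0 in hc *;
set d := A 1 1 in hd *.
have had : 0 <= a * (a*d - b*c).
  have -> : a * (a*d - b*c) = inner (mkv (-b) a) (A *m mkv (-b) a).
    by rewrite quad2 mkv0 mkv1 (geC0_conj ha) -/a -/b -/c -/d; ring.
  exact: hA.
have hdd : 0 <= d * (a*d - b*c).
  have -> : d * (a*d - b*c) = inner (mkv d (-c)) (A *m mkv d (-c)).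
    by rewrite quad2 mkv0 mkv1 (geC0_conj hd) -/a -/b -/c -/d; ring.
  exact: hA.
have [t0|t0] := eqVneq (a + d) 0.
  move/eqP: t0; rewrite paddr_eq0 // => /andP[/eqP a0 /eqP d0].
  have hb : 0 <= - (b * b^* + b * b^*).
    have -> : - (b * b^* + b * b^*) = inner (mkv 1 (-c)) (A *m mkv 1 (-c)).
      rewrite quad2 mkv0 mkv1 -/a -/b -/c -/d a0 d0 hc rmorph1 rmorphN /= conjCK.
      ring.
    exact: hA.
  have b0 : b = 0.
    have hbb : 0 <= b * b^* := mul_conjC_ge0 b.
    have : b * b^* + b * b^* == 0.
      by rewrite eq_le -oppr_ge0 hb addr_ge0.
    by rewrite paddr_eq0 // andbb mul_conjC_eq0 => /eqP.
  exists 0; split; first by move=> x; rewrite mul0mx inner0r.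
  rewrite mul0mx; apply/matrixP => i j; rewrite mxE.
  case: (ord2_cases i) => ->; case: (ord2_cases j) => -> //; rewrite -/a -/b -/c -/d.
  by rewrite ?a0 ?d0 ?hc ?b0 ?rmorph0.
have t_gt0 : 0 < a + d by rewrite lt_def t0 addr_ge0.
set t := a + d in t0 t_gt0.
set dl := a * d - b * c in had hdd.
have dl_ge0 : 0 <= dl.
  by rewrite -(pmulr_rge0 _ t_gt0) /t mulrDl addr_ge0.
set s := sqrtC dl.
have s_ge0 : 0 <= s by rewrite sqrtC_ge0.
have hs : s * s = dl by rewrite -expr2 sqrtCK.
have tau_gt0 : 0 < t + s *+ 2 by apply: ltr_wpDr => //; rewrite mulrn_wge0.
set tau := t + s *+ 2 in tau_gt0.
set r := sqrtC tau.
have r_gt0 : 0 < r by rewrite sqrtC_gt0.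
have hr : r * r = tau by rewrite -expr2 sqrtCK.
exists (r^-1 *: (A + s%:M)); split.
  move=> x; rewrite -scalemxAl mulmxDl mul_scalar_mx innerZr innerDr innerZr.
  apply: mulr_ge0; first by rewrite invr_ge0 ltW.
  apply: addr_ge0 => //; apply: mulr_ge0 => //; exact: inner_ge0.
apply/matrixP => i j; rewrite !mxE sum2 !mxE.
case: (ord2_cases i) => ->; case: (ord2_cases j) => -> /=; rewrite -/a -/b -/c -/d.
all: rewrite ?mulr1n ?mulr0n ?addr0; apply: sq_aux hr (negbT (gt_eqF r_gt0)) _.
- by apply: (subeq (z := s * s) (w := dl)) => //; rewrite /tau /t /dl; ring.
- by rewrite /tau /t; ring.
- by rewrite /tau /t; ring.
- by apply: (subeq (z := s * s) (w := dl)) => //; rewrite /tau /t /dl; ring.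
Qed.

Lemma psqrt_spec A : psd A -> psd (psqrt A) /\ psqrt A *m psqrt A = A.
Proof. move=> hA; exact: (epsilon_spec (inhabits 0) (fun S : 'M[C]_2 => psd S /\ S *m S = A) (psqrt_exists hA)). Qed.

Lemma psd_rank1 k x : 0 <= k -> psd (k *: (x *m adjm x)).
Proof.
move=> hk z; rewrite -scalemxAl rank1_mul innerZr innerZr -innerC.
by rewrite mulr_ge0 // mulrC mul_conjC_ge0.
Qed.

Lemma rank1_sq x : x *m adjm x *m (x *m adjm x) = inner x x *: (x *m adjm x).
Proof. by rewrite mulmxA rank1_mul -scalemxAl. Qed.

Lemma sqrt_rank1 S k x : psd S -> 0 <= k -> S *m S = k *: (x *m adjm x) ->
  S = (sqrtC k / sqrtC (inner x x)) *: (x *m adjm x).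
Proof.
move=> hS hk H; have hH := psd_herm hS.
set n := inner x x; set X := x *m adjm x.
have n_ge0 : 0 <= n := inner_ge0 x.
have [k0|k0] := eqVneq k 0.
  rewrite k0 sqrtC0 mul0r scale0r -[S]mulmx1; apply: herm_sq0_mx => //.
  by rewrite mulmx1 H k0 scale0r.
have [n0|n0] := eqVneq n 0.
  have x0 : x = 0 := inner_eq0 n0.
  have X0 : X = 0 by rewrite /X x0 mul0mx.
  rewrite /X x0 mul0mx scaler0 -[S]mulmx1; apply: herm_sq0_mx => //.
  by rewrite mulmx1 H /X x0 mul0mx scaler0.
have Sx : S *m x = sqrtC (k * n) *: x.
  apply: psd_eig => //; first by rewrite mulr_ge0.
  by rewrite mulmxA H -scalemxAl rank1_mul scalerA.
have SM : S *m (1%:M - n^-1 *: X) = 0.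
  apply: herm_sq0_mx => //.
  rewrite H mulmxBr mulmx1 -scalemxAr -scalemxAl rank1_sq !scalerA.
  rewrite -/n mulrAC mulVf // mul1r.
  by rewrite subrr.
move: SM; rewrite mulmxBr mulmx1 -scalemxAr /X mulmxA Sx -scalemxAl scalerA.
move/eqP; rewrite subr_eq0 => /eqP ->; congr (_ *: _).
rewrite sqrtCM ?nnegrE // -{1}(sqrtCK n) expr2 invfM.
have sn0 : sqrtC n != 0 by rewrite sqrtC_eq0.
by field.
Qed.

Lemma XQX x v : x *m adjm x *m (v *m adjm v) *m (x *m adjm x)
  = (inner x v * inner v x) *: (x *m adjm x).
Proof.
rewrite !mulmxA rank1_mul -!scalemxAl -(mulmxA x) [adjm v *m x]mx11_scalar.
by rewrite mul_mx_scalar -scalemxAl scalerA.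
Qed.

Lemma step_rank1 k x v : 0 <= k ->
  psqrt (k *: (x *m adjm x)) *m (v *m adjm v) *m psqrt (k *: (x *m adjm x))
  = (k * (inner x v * inner v x / inner x x)) *: (x *m adjm x).
Proof.
move=> hk; have [hS hSS] := psqrt_spec (psd_rank1 x hk).
rewrite (sqrt_rank1 hS hk hSS).
set n := inner x x.
have [n0|n0] := eqVneq n 0.
  have x0 : x = 0 := inner_eq0 n0.
  by rewrite x0 !mul0mx !scaler0 mulmx0.
rewrite -scalemxAl -scalemxAr -scalemxAl scalerA XQX scalerA.
congr (_ *: _).
have aa : sqrtC k / sqrtC n * (sqrtC k / sqrtC n) = k / n.
  by rewrite -expr2 expr_div_n !sqrtCK.
rewrite aa; field; exact: n0.
Qed.

Definition vperp (u : 'cV[C]_2) : 'cV[C]_2 := mkv (- (u 1 0)^*) ((u 0 0)^*).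

Lemma via1 (p q e : C) : p - q = 1 - e -> e = 1 -> p = q.
Proof. by move=> H e1; apply/eqP; rewrite -subr_eq0 H e1 subrr. Qed.

Lemma Q_eq u : vnorm2 u = 1 -> 1 - ketbra u u = vperp u *m adjm (vperp u).
Proof.
move=> hu.
have hu' : (u 0 0)^* * u 0 0 + (u 1 0)^* * u 1 0 = 1 by rewrite -hu vnorm2E inner_sum sum2.
apply/matrixP => i j; rewrite /ketbra /vperp !mxE !big_ord1 !mxE.
case: (ord2_cases i) => ->; case: (ord2_cases j) => -> /=; rewrite ?mkv0 ?mkv1.
all: rewrite -[ord0]/(0 : 'I_1) ?rmorphN /= ?conjCK.
- by apply: (via1 _ hu'); ring.
- by ring.
- by ring.
- by apply: (via1 _ hu'); ring.
Qed.

Lemma vperp_unit u : vnorm2 u = 1 -> inner (vperp u) (vperp u) = 1.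
Proof.
move=> hu.
have hu' : (u 0 0)^* * u 0 0 + (u 1 0)^* * u 1 0 = 1 by rewrite -hu vnorm2E inner_sum sum2.
rewrite inner_sum sum2 /vperp mkv0 mkv1 rmorphN /= !conjCK -hu'; ring.
Qed.

Lemma CS x z : inner x z * inner z x <= inner x x * inner z z.
Proof.
set n := inner x x.
have [n0|n0] := eqVneq n 0.
  have x0 : x = 0 := inner_eq0 n0.
  by rewrite x0 inner0l inner0r mul0r n0 mul0r.
have n_gt0 : 0 < n by rewrite lt_def n0 inner_ge0.
set w := z - (inner x z / n) *: x.
have hw : inner w w = inner z z - inner x z * inner z x / n.
  rewrite /w innerBl !innerBr !innerZl !innerZr -/n rmorphM fmorphV /=.
  rewrite (geC0_conj (inner_ge0 x)) -/n innerC.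
  field; exact: n0.
have := inner_ge0 w; rewrite hw subr_ge0 ler_pdivrMr //; by rewrite [X in _ <= X]mulrC.
Qed.

Lemma cvg_geom (f : nat -> 'M[C]_2) (c : C) x : 0 <= c -> c < 1 ->
  (forall m, f m.+1 = c ^+ m *: (x *m adjm x)) -> norm_cvg f 0.
Proof.
move=> c0 c1 hf eps eps_gt0.
set n := inner x x.
have n_ge0 : 0 <= n := inner_ge0 x.
have [N hN] : exists N, forall m, (N <= m)%N -> c ^+ m * n <= eps.
  have [n0|n0] := eqVneq n 0.
    by exists 0%N => m _; rewrite n0 mulr0 ltW.
  have n_gt0 : 0 < n by rewrite lt_def n0 n_ge0.
  have [N hN] := geo_small c0 c1 (divr_gt0 eps_gt0 n_gt0).
  exists N => m hm; rewrite -ler_pdivlMr //; exact: hN.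
exists N.+1 => m hm z.
case: m hm => [//|m] hm; rewrite ltnS in hm.
rewrite hf subr0 -scalemxAl rank1_mul scalerA vnorm2E innerZl innerZr -/n.
rewrite rmorphM /= (geC0_conj (exprn_ge0 m c0)) innerC vnorm2E.
set q := inner z x * inner x z.
have hq : q <= n * inner z z by rewrite /q mulrC; exact: CS.
set p := c ^+ m.
have p0 : 0 <= p by rewrite exprn_ge0.
have e : p * inner z x * (p * inner x z * n) = (p * p) * (q * n) by rewrite /q; ring.
rewrite e.
apply: le_trans (_ : (p * p) * ((n * inner z z) * n) <= _).
  by rewrite ler_wpM2l ?mulr_ge0 // ler_wpM2r.
have e2 : p * p * (n * inner z z * n) = ((p * n) * (p * n)) * inner z z by ring.
rewrite e2 ler_wpM2r ?inner_ge0 // expr2.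
by apply: ler_pM; rewrite ?mulr_ge0 //; apply: hN.
Qed.
End Work.

Unset Implicit Arguments.

Theorem lemma2p1 (R : realType) (u : 'cV[R[i]]_2) (A : 'M[R[i]]_2) :
  vnorm2 u = 1 -> psd A ->
  let P := ketbra u u in
  (P *m A = A *m P ->
     psqrt A *m (1 - P) *m psqrt A = (1 - P) *m A *m (1 - P)) /\
  norm_cvg (Rseq P A)
    (if P *m A == A *m P then psqrt A *m (1 - P) *m psqrt A else 0).
Proof.
move=> hu hA P.
set v := vperp u.
have hQ : 1 - P = v *m adjm v := Q_eq hu.
have hvv : inner v v = 1 := vperp_unit hu.
have [hS hSS] := psqrt_spec hA.
have hSH := psd_herm hS; have hAH := psd_herm hA.
set S := psqrt A in hS hSS hSH *.
set x := S *m v.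
set c := inner x v * inner v x / inner x x.
have c_ge0 : 0 <= c.
  by rewrite /c divr_ge0 ?inner_ge0 // -innerC mulrC mul_conjC_ge0.
have R1 : S *m (1 - P) *m S = x *m adjm x by rewrite hQ /x adjmM hSH !mulmxA.
have Rn : forall n, Rseq P A n.+1 = c ^+ n *: (x *m adjm x).
  elim=> [|n IH]; first by rewrite expr0 scale1r -R1.
  have -> : Rseq P A n.+2 = psqrt (Rseq P A n.+1) *m (1 - P) *m psqrt (Rseq P A n.+1) by [].
  by rewrite IH hQ step_rank1 ?exprn_ge0 // exprSr.
have Qv : (v *m adjm v) *m v = v by rewrite rank1_mul hvv scale1r.
have PQ : P = 1 - v *m adjm v by rewrite -hQ opprB addrC subrK.
have commPQ : P *m A = A *m P <-> (v *m adjm v) *m A = A *m (v *m adjm v).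
  rewrite PQ mulmxBl mulmxBr mul1mx mulmx1; split => [H|->//].
  by apply: oppr_inj; apply: (addrI A).
have comm_facts : (v *m adjm v) *m A = A *m (v *m adjm v) ->
    let a := inner v (A *m v) in 0 <= a /\ S *m v = sqrtC a *: v /\ A *m v = a *: v.
  move=> hc a; have a0 : 0 <= a := hA v.
  have Av : A *m v = a *: v by rewrite -{1}Qv mulmxA -hc -mulmxA rank1_mul.
  split => //; split => //.
  by apply: psd_eig => //; rewrite mulmxA hSS Av.
split.
  move=> /commPQ hc; have [a0 [Sv Av]] := comm_facts hc.
  set a := inner v (A *m v) in a0 Sv Av.
  have sa : (sqrtC a)^* = sqrtC a by apply: geC0_conj; rewrite sqrtC_ge0.
  rewrite R1 /x Sv adjmZ -scalemxAl -scalemxAr scalerA sa -expr2 sqrtCK.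
  by rewrite hQ -mulmxA [A *m _]mulmxA Av -scalemxAl -scalemxAr rank1_sq hvv scale1r.
case: ifP => [/eqP /commPQ hc | hnc].
  have [a0 [Sv Av]] := comm_facts hc.
  set a := inner v (A *m v) in a0 Sv Av.
  have sa : (sqrtC a)^* = sqrtC a by apply: geC0_conj; rewrite sqrtC_ge0.
  have fixR : forall n, Rseq P A n.+1 = x *m adjm x.
    move=> n; rewrite Rn.
    have [az|az] := eqVneq a 0.
      by rewrite /x Sv az sqrtC0 scale0r mul0mx scaler0.
    have saz : sqrtC a != 0 by rewrite sqrtC_eq0.
    have c1 : c = 1.
      rewrite /c /x Sv !innerZl !innerZr hvv sa !mulr1 divff //.
      by rewrite mulf_neq0.
    by rewrite c1 expr1n scale1r.
  rewrite R1 => eps eps_gt0; exists 1%N => m hm z.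
  case: m hm => // m _.
  rewrite fixR subrr mul0mx vnorm2E inner0l.
  by rewrite mulr_ge0 ?inner_ge0 // exprn_ge0 // ltW.
set n := inner x x in c_ge0 Rn *.
have [n0|n0] := eqVneq n 0.
  have x0 : x = 0 := inner_eq0 n0.
  apply: (cvg_geom (c := 0) (x := x)) => [||m]; first by [].
    exact: ltr01.
  by rewrite Rn x0 mul0mx !scaler0.
have n_gt0 : 0 < n by rewrite lt_def n0 inner_ge0.
set mu := inner v x.
set w := x - mu *: v.
have hw : inner w w = n - inner x v * mu.
  rewrite /w innerBl !innerBr !innerZl !innerZr hvv /mu innerC -/n; ring.
have c_le1 : c <= 1.
  rewrite /c ler_pdivrMr // mul1r.
  by have := inner_ge0 w; rewrite hw subr_ge0.
have c_ne1 : c != 1.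
  apply/negP => /eqP c1.
  have pn : inner x v * mu = n.
    by rewrite -[RHS]mul1r -c1 /c mulfVK.
  have w0 : w = 0 by apply: inner_eq0; rewrite hw pn subrr.
  have xmu : S *m v = mu *: v.
    by move/eqP: w0; rewrite subr_eq0 => /eqP.
  have mu0 : 0 <= mu by rewrite /mu /x; exact: hS.
  have Av : A *m v = (mu * mu) *: v.
    by rewrite -hSS -mulmxA xmu -scalemxAr xmu scalerA.
  have hc : (v *m adjm v) *m A = A *m (v *m adjm v).
    have e : adjm v *m A = adjm (A *m v) by rewrite adjmM hAH.
    rewrite -mulmxA e Av adjmZ mulmxA Av -scalemxAr -scalemxAl.
    by rewrite (geC0_conj (mulr_ge0 mu0 mu0)).
  by move: hnc; rewrite (proj2 commPQ hc) eqxx.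
have c_lt1 : c < 1 by rewrite lt_neqAle c_ne1 c_le1.
exact: cvg_geom c_ge0 c_lt1 Rn.
Qed.
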